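(* Let $\mathcal C=(C,\chi,\ell)$ be a simplicial model, $X\in C$ any simplex, and $\varphi\in\mathcal L_K(\chi(X),P|\chi(X))$, where $P|\chi(X)=\bigcup_{a\in\chi(X)}P_a$. Then $\mathcal C,X\models_{lr}\varphi$ iff $\mathcal C,X\models_{mp}\varphi$.
   Context: Fix a finite set $A$ of agents and pairwise disjoint sets $P_a$ ($a\in A$) of local variables, with $P=\bigcup_{a\in A}P_a$. A simplicial complex $C$ on vertex set $\mathcal V(C)$ is a set of nonempty finite subsets (simplices) of $\mathcal V(C)$ closed under nonempty subsets and containing all singletons; maximal simplices are facets, $\mathcal F(C)$. A simplicial model $\mathcal C=(C,\chi,\ell)$ consists of such $C$, a colouring $\chi:\mathcal V(C)\to A$ such that every facet contains exactly one vertex of each colour, and $\ell:\mathcal V(C)\to\mathcal P(P)$ with $\ell(v)\subseteq P_{\chi(v)}$. For a simplex $X$: $\chi(X)=\{\chi(v):v\in X\}$, $\ell(X)=\bigcup_{v\in X}\ell(v)$. For $B\subseteq A$ and $Q\subseteq P$, $\mathcal L_K(B,Q)$ is given by $\varphi::=p\mid\neg\varphi\mid\varphi\wedge\varphi\mid K_a\varphi$ with $p\in Q$, $a\in B$. Facet semantics: $\mathcal C,X\models p$ iff $p\in\ell(X)$; negation, conjunction classical; $\mathcal C,X\models K_a\varphi$ iff $\mathcal C,Y\models\varphi$ for all $Y\in\mathcal F(C)$ with $a\in\chi(X\cap Y)$. Multi-pointed local semantics: for any simplex $Y\in C$, $\mathcal C,Y\models_{mp}\varphi$ iff $\mathcal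 C,Z\models\varphi$ (facet semantics) for all facets $Z\in\mathcal F(C)$ with $Y\subseteq Z$. Language-restricted local semantics: for a simplex $X$ and $\varphi\in\mathcal L_K(\chi(X),P|\chi(X))$, defined by induction: $\mathcal C,X\models_{lr}p_a$ iff $p_a\in\ell(X)$; $\neg$ and $\wedge$ classical; $\mathcal C,X\models_{lr}K_a\varphi$ iff $\mathcal C,Y\models_{lr}\varphi$ for all simplices $Y\in C$ with $\chi(Y)=\chi(X)$ and $a\in\chi(X\cap Y)$. *)

(* Defs.v *)
From mathcomp Require Import all_boot.
Set Implicit Arguments. Unset Strict Implicit. Unset Printing Implicit Defensive.

Inductive form (A Pv : Type) : Type :=
  | fVar : Pv -> form A Pv
  | fNeg : form A Pv -> form A Pv
  | fAnd : form A Pv -> form A Pv -> form A Pv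
  | fK   : A -> form A Pv -> form A Pv.
Arguments fVar {A Pv}. Arguments fNeg {A Pv}. Arguments fAnd {A Pv}. Arguments fK {A Pv}.

Fixpoint in_lang (A : finType) (Pv : Type) (B : {set A}) (Q : Pv -> bool)
    (phi : form A Pv) : bool :=
  match phi with
  | fVar p => Q p
  | fNeg psi => in_lang B Q psi
  | fAnd psi1 psi2 => in_lang B Q psi1 && in_lang B Q psi2
  | fK a psi => (a \in B) && in_lang B Q psi
  end.

Section Simplicial.
Variables (A : finType) (Pv : Type) (owner : Pv -> A).
(* owner p = a  means  p \in P_a ; the P_a are thus pairwise disjoint, P = Pv. *)
Variables (V : finType) (C : {set {set V}}) (col : V -> A) (lab : V -> Pv -> bool).

Definition is_facet (X : {set V}) : Prop :=
  X \in C /\ forall Y : {set V}, Y \in C -> X \subset Y -> Y = X.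

Definition is_simplicial_complex : Prop :=
  [/\ forall X : {set V}, X \in C -> X != set0,
      forall X Y : {set V}, X \in C -> Y \subset X -> Y != set0 -> Y \in C
    & forall v, [set v] \in C].

Definition is_simplicial_model : Prop :=
  [/\ is_simplicial_complex,
      forall Z : {set V}, is_facet Z -> forall a : A, #|[set v in Z | col v == a]| = 1
    & forall v p, lab v p -> owner p = col v].

Definition colset (X : {set V}) : {set A} := [set col v | v in X].

Definition localvars (X : {set V}) : Pv -> bool := fun p => owner p \in colset X.

Definition ell_has (X : {set V}) (p : Pv) : Prop := exists2 v, v \in X & lab v p.

Definition shares (a : A) (X Y : {set V}) : Prop := exists2 v, v \in X :&: Y & col v = a.

Fixpoint sat (X : {set V}) (phi : form A Pv) : Prop :=
  match phi with
  | fVar p => ell_has X p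
  | fNeg psi => ~ sat X psi
  | fAnd psi1 psi2 => sat X psi1 /\ sat X psi2
  | fK a psi => forall Y : {set V}, is_facet Y -> shares a X Y -> sat Y psi
  end.

Definition sat_mp (Y : {set V}) (phi : form A Pv) : Prop :=
  forall Z : {set V}, is_facet Z -> Y \subset Z -> sat Z phi.

Fixpoint sat_lr (X : {set V}) (phi : form A Pv) : Prop :=
  match phi with
  | fVar p => ell_has X p
  | fNeg psi => ~ sat_lr X psi
  | fAnd psi1 psi2 => sat_lr X psi1 /\ sat_lr X psi2
  | fK a psi => forall Y : {set V}, Y \in C -> colset Y = colset X -> shares a X Y -> sat_lr Y psi
  end.

End Simplicial.

(* Main.v *)
Require Import Defs.
From mathcomp Require Import all_boot.
Set Implicit Arguments. Unset Strict Implicit. Unset Printing Implicit Defensive.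

Section Proof.
Variables (A : finType) (Pv : Type) (owner : Pv -> A).
Variables (V : finType) (C : {set {set V}}) (col : V -> A) (lab : V -> Pv -> bool).
Hypothesis HM : is_simplicial_model owner C col lab.

Lemma facet_ex (Y : {set V}) : Y \in C -> exists Z, is_facet C Z /\ Y \subset Z.
Proof.
move=> YC.
have P0 : (Y \in C) && (Y \subset Y) by rewrite YC subxx.
case: (@arg_maxnP _ Y (fun Z => (Z \in C) && (Y \subset Z)) (fun Z => #|Z|) P0).
move=> Z /andP[ZC sYZ] Hmax.
exists Z; split => //; split => // W WC sZW.
have sYW : Y \subset W by apply: subset_trans sYZ sZW.
have := Hmax W (introT andP (conj WC sYW)).
move=> le; apply/eqP; rewrite eq_sym eqEcard sZW /=; exact: le.
Qed.

Lemma facet_uniq (Z : {set V}) u w : is_facet C Z -> u \in Z -> w \in Z -> col u = col w -> u = w.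
Proof.
case: HM => _ H2 _ FZ uZ wZ cuw.
have := H2 Z FZ (col u); move/eqP/cards1P => [x Hx].
have : u \in [set v in Z | col v == col u] by rewrite inE uZ eqxx.
have : w \in [set v in Z | col v == col u] by rewrite inE wZ cuw eqxx.
by rewrite Hx !inE => /eqP -> /eqP ->.
Qed.

Lemma facet_col (Z : {set V}) b : is_facet C Z -> exists2 w, w \in Z & col w = b.
Proof.
case: HM => _ H2 _ FZ.
have := H2 Z FZ b; move/eqP/cards1P => [x Hx].
have : x \in [set v in Z | col v == b] by rewrite Hx inE.
rewrite inE => /andP[xZ /eqP cx]; by exists x.
Qed.

Lemma main_gen (phi : form A Pv) (B : {set A}) :
  in_lang B (fun p => owner p \in B) phi ->
  forall X Z, X \in C -> colset col X = B -> is_facet C Z -> X \subset Z ->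
  (sat C col lab Z phi <-> sat_lr C col lab X phi).
Proof.
elim: phi => [p|psi IH|psi1 IH1 psi2 IH2|a psi IH] /= Hl X Z XC cX FZ sXZ.
- rewrite -cX in Hl.
  case/imsetP: Hl => x xX cx.
  split.
  + case=> v vZ lv; exists v => //.
    case: HM => _ _ H3.
    have := H3 v p lv => ov.
    have -> : v = x by apply: (facet_uniq FZ vZ) => //; [exact: (subsetP sXZ) | rewrite -ov].
    done.
  + case=> v vX lv; exists v => //; exact: (subsetP sXZ).
- have := IH Hl X Z XC cX FZ sXZ; tauto.
- case/andP: Hl => h1 h2.
  have := IH1 h1 X Z XC cX FZ sXZ; have := IH2 h2 X Z XC cX FZ sXZ; tauto.
- case/andP: Hl => aB Hl.
  have := aB; rewrite -cX => /imsetP [x xX cx].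
  have xZ : x \in Z by exact: (subsetP sXZ).
  split.
  + move=> H Y YC cY [v] /setIP [vX vY] cv.
    have vx : v = x by apply: (facet_uniq FZ) => //; [exact: (subsetP sXZ)| rewrite cv].
    subst v.
    case: (facet_ex YC) => W [FW sYW].
    have := H W FW; move=> H'.
    have : sat C col lab W psi.
      apply: H'; exists x => //; rewrite inE xZ; exact: (subsetP sYW).
    move=> hW; apply/(IH Hl Y W) => //; by rewrite cY.
  + move=> H W FW [v] /setIP [vZ vW] cv.
    have vx : v = x by apply: (facet_uniq FZ) => //; rewrite cv.
    subst v.
    pose Y := [set w in W | col w \in B].
    have xY : x \in Y by rewrite inE vW -cx aB.
    have YC : Y \in C.
      case: HM => [[_ H2 _] _ _]; apply: (H2 W) => //.
      - by case: FW.
      - by apply/subsetP => w; rewrite inE => /andP[].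
      - by apply/set0Pn; exists x.
    have cY : colset col Y = B.
      apply/setP => b; apply/imsetP/idP.
      - by case=> w; rewrite inE => /andP[_ h] ->.
      - move=> bB; case: (facet_col b FW) => w wW cw; exists w => //.
        by rewrite inE wW cw.
    have : sat_lr C col lab Y psi.
      apply: H => //; first by rewrite cY.
      by exists x => //; rewrite inE xX.
    move=> hY; apply/(IH Hl Y W) => //.
    by apply/subsetP => w; rewrite inE => /andP[].
Qed.

End Proof.

Theorem mainTheorem6 (A : finType) (Pv : Type) (owner : Pv -> A)
    (V : finType) (C : {set {set V}}) (col : V -> A) (lab : V -> Pv -> bool) :
  is_simplicial_model owner C col lab ->
  forall (X : {set V}) (phi : form A Pv),
    X \in C ->
    in_lang (colset col X) (localvars owner col X) phi ->
    (sat_lr C col lab X phi <-> sat_mp C col lab X phi).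
Proof.
move=> HM X phi XC Hl.
have G := @main_gen A Pv owner V C col lab HM phi (colset col X) Hl X.
split.
- move=> H Z FZ sXZ; by apply/(G Z).
- move=> H; case: (facet_ex XC) => Z [FZ sXZ].
  by apply/(G Z) => //; apply: H.
Qed.
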